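(* Let $g>0$, $\gamma>0$, and let $\hat\nu:\mathbb R\to[\nu_0,\nu_1]$ be a stretch-limiting constitutive function (independent of $s$) as in the context. For $b\in(\nu_0,\nu_1)$, let $N(0)\in\mathbb R$ be the unique number with $$b=\int_0^1\hat\nu(N(0)+g\gamma s)\,ds,$$ so that the vertical uniform string hanging from $\mathbf 0$ to $b\mathbf k$ has tension $N(s)=N(0)+g\gamma s$. Let $\epsilon\in(0,1)$. Then for all $\gamma>0$ sufficiently small (depending on $\epsilon$ and $\hat\nu$) the following holds. If $$\nu_1-(1-\epsilon)\frac{g\gamma}{2}\hat\nu_{N^-}(N_1)\le b<\nu_1,$$ then $N(0)>0$ and $\frac{N_1-N(0)}{g\gamma}\in(0,1)$ (i.e. the string is a union of an elongated extensible segment and an inextensible segment). Conversely, if $N(0)>0$ and $\frac{N_1-N(0)}{g\gamma}\in(0,1)$, then $$\nu_1-(1+\epsilon)\frac{g\gamma}{2}\hat\nu_{N^-}(N_1)\le b<\nu_1.$$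
   Context: Stretch-limited constitutive function: there are constants $N_0<0<N_1$ and $0<\nu_0<1<\nu_1$ with $\hat\nu(N)=\nu_0$ for $N\le N_0$, $\hat\nu(N)=\nu_1$ for $N\ge N_1$, $\hat\nu\in C^\infty([N_0,N_1];[\nu_0,\nu_1])$, $\hat\nu(0)=1$, and $\hat\nu'(N)\ge c>0$ on $[N_0,N_1]$. $\hat\nu_{N^-}(N_1)$ denotes the left derivative of $\hat\nu$ at $N_1$ (the derivative at $N_1$ of the restriction of $\hat\nu$ to $[N_0,N_1]$). The setting is a uniform vertical string of mass per unit reference length $\gamma$ with $\mathbf r(0)=\mathbf 0$, $\mathbf r(1)=b\mathbf k$, $\mathbf r=z\mathbf k$, stretch $z'(s)=\hat\nu(N(s))$ and tension $N(s)=N(0)+g\gamma s$; the stated integral equation is the condition $z(1)=b$, and existence/uniqueness of $N(0)$ for $b\in(\nu_0,\nu_1)$ holds because $N(0)\mapsto\int_0^1\hat\nu(N(0)+g\gamma s)ds$ is continuous and increasing on $[N_0-g\gamma,N_1]$ with values from $\nu_0$ to $\nu_1$. *)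

(* Defs.v *)
From Stdlib Require Import Reals.
From Coquelicot Require Import Coquelicot.
Open Scope R_scope.

Definition stretch_limited (nu : R -> R) (N0 N1 nu0 nu1 : R) : Prop :=
  N0 < 0 /\ 0 < N1 /\ 0 < nu0 /\ nu0 < 1 /\ 1 < nu1 /\
  (forall N, N <= N0 -> nu N = nu0) /\
  (forall N, N1 <= N -> nu N = nu1) /\
  (forall N, N0 <= N <= N1 -> nu0 <= nu N <= nu1) /\
  nu 0 = 1 /\
  exists F : R -> R,
    (forall (n : nat) (x : R), ex_derive_n F n x) /\
    (forall x, N0 <= x <= N1 -> F x = nu x) /\
    (exists c, 0 < c /\ forall x, N0 <= x <= N1 -> c <= Derive F x).

Definition is_left_derive (f : R -> R) (x d : R) : Prop :=
  filterlim (fun h => (f (x + h) - f x) / h) (at_left 0) (locally d).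

(* Main.v *)
Require Import Defs.
From Stdlib Require Import Reals Lra.
From Coquelicot Require Import Coquelicot.
Open Scope R_scope.

Definition clamp (a b x : R) := Rmax a (Rmin b x).

Lemma ballR (x e y : R) : ball x e y <-> Rabs (y - x) < e.
Proof. unfold ball; simpl; unfold AbsRing_ball, abs, minus, plus, opp; simpl. tauto. Qed.

Lemma clamp_lip a b x y : a <= b -> Rabs (clamp a b y - clamp a b x) <= Rabs (y - x).
Proof.
  intros. unfold clamp.
  destruct (Rle_dec b x), (Rle_dec b y).
  - rewrite !Rmin_left by lra. rewrite !Rmax_right by lra. rewrite Rminus_diag, Rabs_R0. apply Rabs_pos.
  - rewrite (Rmin_left b x), (Rmin_right b y) by lra.
    rewrite (Rmax_right a b) by lra. unfold Rmax; destruct Rle_dec;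
    unfold Rabs; repeat destruct Rcase_abs; lra.
  - rewrite (Rmin_right b x), (Rmin_left b y) by lra.
    rewrite (Rmax_right a b) by lra. unfold Rmax; destruct Rle_dec;
    unfold Rabs; repeat destruct Rcase_abs; lra.
  - rewrite (Rmin_right b x), (Rmin_right b y) by lra.
    unfold Rmax; repeat destruct Rle_dec;
    unfold Rabs; repeat destruct Rcase_abs; lra.
Qed.

Lemma clamp_cont a b x : a <= b -> continuous (clamp a b) x.
Proof.
  intros Hab. apply filterlim_locally. intros eps.
  exists eps. intros y Hy. rewrite ballR. rewrite ballR in Hy.
  pose proof (clamp_lip a b x y Hab). lra.
Qed.

Lemma clamp_mono a b x y : a <= b -> x <= y -> clamp a b x <= clamp a b y.
Proof. intros. unfold clamp, Rmax, Rmin. repeat destruct Rle_dec; lra. Qed.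

Lemma clamp_in a b x : a <= b -> a <= clamp a b x <= b.
Proof. intros. unfold clamp, Rmax, Rmin. repeat destruct Rle_dec; lra. Qed.

Lemma lin_int (nu1 K : R) :
  RInt (fun s => nu1 - K * (1 - s)) 0 1 = nu1 - K / 2.
Proof.
  apply is_RInt_unique.
  assert (H1 : forall x, Rmin 0 1 <= x <= Rmax 0 1 ->
     is_derive (fun s => nu1 * s - K * (s - s * s / 2)) x (nu1 - K * (1 - x))).
  { intros x _. auto_derive; auto. simpl. field. }
  assert (H2 : forall x, Rmin 0 1 <= x <= Rmax 0 1 -> continuous (fun s => nu1 - K * (1 - s)) x).
  { intros z _. apply (ex_derive_continuous (fun s => nu1 - K * (1 - s))).
    auto_derive. auto. }
  pose proof (is_RInt_derive _ _ 0 1 H1 H2) as H.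
  match type of H with is_RInt _ _ _ ?v =>
    replace (nu1 - K / 2) with v; [exact H|] end.
  unfold minus, plus, opp; simpl. field.
Qed.

Theorem proposition3p2 (g : R) (nu : R -> R) (N0 N1 nu0 nu1 d eps : R) :
  0 < g ->
  stretch_limited nu N0 N1 nu0 nu1 ->
  is_left_derive nu N1 d ->
  0 < eps < 1 ->
  exists gamma0 : R, 0 < gamma0 /\
    forall (gamma b Nzero : R),
      0 < gamma < gamma0 ->
      nu0 < b < nu1 ->
      b = RInt (fun s => nu (Nzero + g * gamma * s)) 0 1 ->
      (nu1 - (1 - eps) * (g * gamma / 2) * d <= b < nu1 ->
         0 < Nzero /\ 0 < (N1 - Nzero) / (g * gamma) < 1) /\
      (0 < Nzero /\ 0 < (N1 - Nzero) / (g * gamma) < 1 ->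
         nu1 - (1 + eps) * (g * gamma / 2) * d <= b < nu1).
Proof.
  intros Hg Hs Hd Heps.
  destruct Hs as (HN0 & HN1 & Hnu0 & Hnu01 & Hnu1 & Hlow & Hhigh & Hmid & H0 & F & HFd & HFeq & c & Hc & HFc).
  assert (HN : N0 <= N1) by lra.
  assert (Hnuc : forall x, nu x = F (clamp N0 N1 x)).
  { intros x. unfold clamp.
    destruct (Rle_lt_dec x N0) as [Hx|Hx].
    - rewrite Rmin_right by lra. rewrite Rmax_left by lra.
      rewrite (HFeq N0) by lra. rewrite (Hlow x) by lra. symmetry; apply Hlow; lra.
    - destruct (Rle_lt_dec N1 x) as [Hx'|Hx'].
      + rewrite Rmin_left by lra. rewrite Rmax_right by lra.
        rewrite (HFeq N1) by lra. rewrite (Hhigh x) by lra. symmetry; apply Hhigh; lra.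
      + rewrite Rmin_right by lra. rewrite Rmax_right by lra.
        rewrite (HFeq x) by lra. reflexivity. }
  assert (HFder : forall x, is_derive F x (Derive F x)).
  { intros x. apply Derive_correct. apply (HFd 1%nat x). }
  assert (HFmono : forall x y, N0 <= x -> x <= y -> y <= N1 -> F x <= F y).
  { intros x y H1 H2 H3. destruct (Req_dec x y) as [->|Hne]; [lra|].
    left. apply (incr_function_le F N0 N1 (Derive F)); simpl; auto; try lra.
    intros z Hz1 Hz2. specialize (HFc z (conj Hz1 Hz2)). lra. }
  assert (Hmono : forall x y, x <= y -> nu x <= nu y).
  { intros x y Hxy. rewrite !Hnuc.
    destruct (clamp_in N0 N1 x HN), (clamp_in N0 N1 y HN).
    apply HFmono; auto. apply clamp_mono; auto. }
  assert (Hcont : forall x, continuous nu x).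
  { intros x. apply (@continuous_ext R_UniformSpace R_UniformSpace (fun y => F (clamp N0 N1 y))).
    2: apply (@continuous_comp R_UniformSpace R_UniformSpace R_UniformSpace (clamp N0 N1) F); [apply clamp_cont; auto|apply (@ex_derive_continuous R_AbsRing R_NormedModule F); apply (HFd 1%nat)].
    intros; symmetry; apply Hnuc. }
  assert (HnuN1 : nu N1 = nu1) by (apply Hhigh; lra).
  assert (Hq : forall eta, 0 < eta -> exists delta, 0 < delta /\
            forall t, 0 < t < delta -> Rabs ((nu1 - nu (N1 - t)) / t - d) < eta).
  { intros eta Heta. unfold is_left_derive in Hd.
    apply filterlim_locally with (eps := mkposreal eta Heta) in Hd.
    destruct Hd as [del Hdel]. exists del. split; [apply cond_pos|].
    intros t Ht. assert (Hb : ball 0 del (-t)).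
    { rewrite ballR. rewrite Rminus_0_r, Rabs_Ropp, Rabs_pos_eq; lra. }
    specialize (Hdel (-t) Hb ltac:(lra)). rewrite ballR in Hdel. simpl in Hdel.
    rewrite HnuN1 in Hdel.
    replace ((nu1 - nu (N1 - t)) / t) with ((nu (N1 + - t) - nu1) / - t); auto.
    unfold Rminus. field. lra. }
  assert (Hdpos : 0 < d).
  { destruct (Hq (c/2) ltac:(lra)) as [del [Hdel Hdq]].
    pose proof (HFder N1) as HD. apply is_derive_Reals in HD.
    destruct (HD (c/2) ltac:(lra)) as [del' Hdel'].
    set (t := Rmin (Rmin del del') (N1 - N0) / 2).
    assert (Ht1 : 0 < t).
    { unfold t.
      assert (0 < Rmin (Rmin del del') (N1 - N0)); [|lra].
      apply Rmin_glb_lt; [apply Rmin_glb_lt; [lra|apply cond_pos]|lra]. }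
    assert (Ht2 : t < del /\ t < del' /\ t < N1 - N0).
    { unfold t in *. pose proof (Rmin_l (Rmin del del') (N1 - N0)).
      pose proof (Rmin_r (Rmin del del') (N1 - N0)).
      pose proof (Rmin_l del del'). pose proof (Rmin_r del del'). lra. }
    specialize (Hdq t ltac:(lra)).
    assert (Hne : -t <> 0) by lra.
    assert (Hab : Rabs (-t) < del') by (rewrite Rabs_Ropp, Rabs_pos_eq; lra).
    specialize (Hdel' (-t) Hne Hab).
    assert (HFc1 := HFc N1 ltac:(lra)).
    rewrite (HFeq (N1 + - t)) in Hdel' by lra. rewrite (HFeq N1) in Hdel' by lra.
    rewrite HnuN1 in Hdel'.
    replace ((nu (N1 + - t) - nu1) / - t) with ((nu1 - nu (N1 - t)) / t) in Hdel'
      by (unfold Rminus; field; lra).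
    apply Rabs_def2 in Hdq. apply Rabs_def2 in Hdel'. lra. }
  destruct (Hq (eps * d / 2) ltac:(nra)) as [del [Hdel Hdq]].
  exists (Rmin del N1 / (2 * g)). split.
  { apply Rdiv_lt_0_compat; [apply Rmin_glb_lt|]; lra. }
  intros gamma b Nzero Hgam Hb Hbint.
  set (a := g * gamma) in *.
  assert (Ha0 : 0 < a) by (unfold a; nra).
  assert (Ha1 : a < del /\ a < N1).
  { destruct Hgam as [_ Hgam].
    apply (Rmult_lt_compat_l g) in Hgam; auto.
    replace (g * (Rmin del N1 / (2 * g))) with (Rmin del N1 / 2) in Hgam by (field; lra).
    pose proof (Rmin_l del N1). pose proof (Rmin_r del N1). unfold a. lra. }
  assert (Hex : ex_RInt (fun s => nu (Nzero + a * s)) 0 1).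
  { apply (@ex_RInt_continuous R_CompleteNormedModule). intros z _.
    apply (@continuous_comp R_UniformSpace R_UniformSpace R_UniformSpace (fun s => Nzero + a * s) nu).
    - apply (@ex_derive_continuous R_AbsRing R_NormedModule). auto_derive. auto.
    - apply Hcont. }
  assert (Hexl : forall K, ex_RInt (fun s => nu1 - K * (1 - s)) 0 1).
  { intros K. apply (@ex_RInt_continuous R_CompleteNormedModule). intros z _.
    apply (ex_derive_continuous (fun s => nu1 - K * (1 - s))). auto_derive. auto. }
  assert (Hbound : forall t, 0 < t < del ->
            (1 - eps/2) * d * t <= nu1 - nu (N1 - t) <= (1 + eps/2) * d * t).
  { intros t Ht. specialize (Hdq t Ht). apply Rabs_def2 in Hdq.
    set (q := (nu1 - nu (N1 - t)) / t) in Hdq.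
    replace (nu1 - nu (N1 - t)) with (q * t) by (unfold q; field; lra).
    split; nra. }
  split.
  - intros [Hlo Hhi].
    assert (HltN1 : Nzero < N1).
    { destruct (Rlt_le_dec Nzero N1) as [|Hge]; auto. exfalso.
      assert (b = nu1); [|lra].
      rewrite Hbint. rewrite (RInt_ext _ (fun _ => nu1)).
      - rewrite RInt_const. unfold scal; simpl; unfold mult; simpl. ring.
      - intros x Hx. rewrite Rmin_left in Hx by lra. rewrite Rmax_right in Hx by lra.
        apply Hhigh. nra. }
    assert (HgtN1a : N1 - a < Nzero).
    { destruct (Rlt_le_dec (N1 - a) Nzero) as [|Hle]; auto. exfalso.
      assert (b <= nu1 - (1 - eps/2) * d * a / 2); [|nra].
      rewrite Hbint, <- lin_int.
      apply RInt_le; auto; try lra. intros s Hs.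
      set (t := a * (1 - s)).
      assert (Ht : 0 < t < del) by (unfold t; nra).
      apply Rle_trans with (nu (N1 - t)).
      + apply Hmono. unfold t. nra.
      + specialize (Hbound t Ht). unfold t in *. nra. }
    split; [lra|]. split.
    + apply Rdiv_lt_0_compat; lra.
    + apply (Rmult_lt_reg_r a); auto. unfold Rdiv. rewrite Rmult_assoc, Rinv_l by lra. lra.
  - intros [Hpos [Hr1 Hr2]].
    assert (HltN1 : Nzero < N1).
    { apply Rmult_lt_compat_r with (r := a) in Hr1; auto.
      unfold Rdiv in Hr1. rewrite Rmult_assoc, Rinv_l in Hr1 by lra. lra. }
    assert (HgtN1a : N1 - a < Nzero).
    { apply Rmult_lt_compat_r with (r := a) in Hr2; auto.
      unfold Rdiv in Hr2. rewrite Rmult_assoc, Rinv_l in Hr2 by lra. lra. }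
    split; [|lra].
    replace (nu1 - (1 + eps) * (a / 2) * d) with (nu1 - (1 + eps) * d * a / 2) by field.
    rewrite Hbint, <- lin_int.
    apply RInt_le; auto; try lra. intros s Hs.
    destruct (Rle_lt_dec N1 (Nzero + a * s)) as [Hge|Hlt].
    + rewrite Hhigh by lra. assert (0 <= (1 + eps) * d * a * (1 - s)).
      { apply Rmult_le_pos; [|lra]. repeat apply Rmult_le_pos; lra. }
      lra.
    + set (t := N1 - Nzero - a * s).
      assert (Ht : 0 < t < del) by (unfold t; nra).
      specialize (Hbound t Ht).
      replace (Nzero + a * s) with (N1 - t) by (unfold t; ring).
      assert (Hta : t <= a * (1 - s)) by (unfold t; nra).
      assert (d * t <= d * (a * (1 - s))) by (apply Rmult_le_compat_l; lra).
      assert (0 <= eps / 2 * (d * t)) by (apply Rmult_le_pos; nra).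
      assert (0 <= (1 + eps) * (d * (a * (1 - s)) - d * t)) by (apply Rmult_le_pos; lra).
      lra.
Qed.
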